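(* Fix an integer $q\ge2$, $c\in\mathbb{R}$ and $\lambda\in(-1/q-c,-c)$ such that $f_c$ satisfies the pre-$q$-Sturmian condition for $\lambda$, with Lipschitz function $\psi$ and constant $\beta$; regard $\psi$ as a $1$-periodic function on $\mathbb{R}$ and $T(x)=qx$ on $\mathbb{R}$. Let $\theta=\lambda+1/q+c\in(0,1/q)$ and $f=f_0$. Then: (i) For any $x\in(\lambda+q^{-1},\lambda+2q^{-1})$, with $t:=x-\lambda-q^{-1}$, $$\psi(T(x))-\psi(T(\lambda+q^{-1}))\ge f(q^{-1}-\theta-t)-f(q^{-1}-\theta)+f'(\theta)\frac{t}{q-1}.$$ (i)' For any $x\in(\lambda-q^{-1},\lambda)$, with $t:=\lambda-x$, $$\psi(T(x))-\psi(T(\lambda))\ge f(\theta-t)-f(\theta)+f'(q^{-1}-\theta)\frac{t}{q-1}.$$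
   Context: $\mathbb{T}=\mathbb{R}/\mathbb{Z}$. $f_0(x)=\log\left|\frac{\sin\pi qx}{\sin\pi x}\right|$ (value $\log q$ at integers), a $1$-periodic even function, real-analytic and strictly concave on $(-1/q,1/q)$; $f_c(x)=f_0(x+c)$. $C_\lambda=[\lambda,\lambda+1/q]\bmod1$. The function $f_c$ satisfies the pre-$q$-Sturmian condition for $\lambda$ if $f_c$ is Lipschitz on $C_\lambda$ and there exist a Lipschitz $\psi:\mathbb{T}\to\mathbb{R}$ and $\beta\in\mathbb{R}$ with $f_c(x)+\psi(x)-\psi(Tx)=\beta$ for all $x\in C_\lambda$, where $Tx=qx\bmod 1$. *)

(* Defs.v *)
From Stdlib Require Import Reals Lra.
From Coquelicot Require Import Coquelicot.
Open Scope R_scope.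

Definition f0 (q : nat) (x : R) : R :=
  if Req_EM_T (sin (PI * x)) 0 then ln (INR q)
  else ln (Rabs (sin (PI * INR q * x) / sin (PI * x))).

Definition fc (q : nat) (c x : R) : R := f0 q (x + c).

(* distance on T = R/Z between the classes of x and y:
   distance from x - y to the nearest integer *)
Definition dT (x y : R) : R :=
  Rabs ((x - y) - IZR (Int_part ((x - y) + /2))).

(* C_lambda = [lambda, lambda + 1/q] mod 1, as a set of reals (a union of
   integer translates) *)
Definition C_set (q : nat) (lam x : R) : Prop :=
  exists k : Z, lam <= x - IZR k <= lam + / INR q.

Definition periodic1 (psi : R -> R) : Prop := forall x, psi (x + 1) = psi x.

Definition lipschitz_T (psi : R -> R) : Prop :=
  exists L : R, forall x y, Rabs (psi x - psi y) <= L * dT x y.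

Definition lipschitz_on_T (S : R -> Prop) (g : R -> R) : Prop :=
  exists L : R, forall x y, S x -> S y -> Rabs (g x - g y) <= L * dT x y.

(* pre-q-Sturmian condition for lambda, with witnesses psi (1-periodic,
   Lipschitz) and beta; T x = q x mod 1, so psi (T x) = psi (q x). *)
Definition pre_sturmian_with (q : nat) (c lam : R) (psi : R -> R) (beta : R)
  : Prop :=
  lipschitz_on_T (C_set q lam) (fc q c) /\
  periodic1 psi /\ lipschitz_T psi /\
  forall x, C_set q lam x -> fc q c x + psi x - psi (INR q * x) = beta.

(* Main.v *)
Require Import Defs.
From Stdlib Require Import Reals Lra Lia ZArith.
From Coquelicot Require Import Coquelicot.
Open Scope R_scope.

Lemma per_nat (psi : R -> R) : periodic1 psi ->
  forall n x, psi (x + INR n) = psi x.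
Proof.
  intros Hp n; induction n as [|n IH]; intros x.
  - simpl. rewrite Rplus_0_r. reflexivity.
  - rewrite S_INR. replace (x + (INR n + 1)) with ((x + INR n) + 1) by ring.
    rewrite Hp. apply IH.
Qed.

Lemma per_Z (psi : R -> R) : periodic1 psi ->
  forall k x, psi (x + IZR k) = psi x.
Proof.
  intros Hp k x.
  destruct (Z_le_gt_dec 0 k) as [H|H].
  - replace k with (Z.of_nat (Z.to_nat k)) by lia.
    rewrite <- INR_IZR_INZ. apply per_nat; auto.
  - replace k with (- Z.of_nat (Z.to_nat (- k)))%Z by lia.
    rewrite opp_IZR, <- INR_IZR_INZ.
    rewrite <- (per_nat psi Hp (Z.to_nat (-k)) (x + - INR (Z.to_nat (- k)))).
    f_equal. ring.
Qed.

Lemma dT_le x y : dT x y <= Rabs (x - y).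
Proof.
  unfold dT. set (d := x - y).
  destruct (base_Int_part (d + /2)) as [H1 H2].
  set (n := Int_part (d + /2)) in *.
  destruct (Rle_or_lt (/2) (Rabs d)) as [Hd|Hd].
  - apply Rle_trans with (/2); auto.
    apply Rabs_le; lra.
  - assert (n = 0%Z).
    { apply Rabs_def2 in Hd. destruct Hd.
      assert (IZR n < 1) by lra. assert (IZR n > -1) by lra.
      apply lt_IZR in H3. apply (lt_IZR (-1)) in H4. lia. }
    rewrite H, Rminus_0_r. lra.
Qed.

Section Core.
Variables (q : nat) (lam beta K L : R) (psi F : R -> R).
Hypothesis Hq : (2 <= q)%nat.
Hypothesis Hp : periodic1 psi.
Hypothesis HL : forall x y, Rabs (psi x - psi y) <= L * Rabs (x - y).
Hypothesis HL0 : 0 <= L.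
Hypothesis Heq : forall x, lam <= x <= lam + / INR q ->
  F x + psi x - psi (INR q * x) = beta.
Hypothesis HK : forall u v, lam <= u -> u <= v -> v <= lam + / INR q ->
  F v - F u >= K * (v - u).

Definition Sset r := forall a b, a <= b -> b - a < 1 -> psi b - psi a >= r * (b - a).

Lemma Qpos : 2 <= INR q.
Proof. apply (le_INR 2) in Hq. simpl in Hq. lra. Qed.

Lemma decomp y : exists k x, lam <= x < lam + / INR q /\ y = INR q * x + IZR k.
Proof.
  pose proof Qpos as HQ.
  destruct (base_Int_part (y - INR q * lam)) as [H1 H2].
  exists (Int_part (y - INR q * lam)).
  exists (lam + (y - INR q * lam - IZR (Int_part (y - INR q * lam))) / INR q).
  split; [split|].
  - assert (0 <= (y - INR q * lam - IZR (Int_part (y - INR q * lam))) / INR q).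
    { apply Rmult_le_pos; [lra| left; apply Rinv_0_lt_compat; lra]. }
    lra.
  - apply Rplus_lt_compat_l. unfold Rdiv.
    rewrite <- (Rmult_1_l (/ INR q)) at 2. apply Rmult_lt_compat_r.
    apply Rinv_0_lt_compat; lra. lra.
  - field. lra.
Qed.

Lemma psi_eq x k : lam <= x <= lam + / INR q ->
  psi (INR q * x + IZR k) = psi x + F x - beta.
Proof. intros H. rewrite per_Z; auto. specialize (Heq x H). lra. Qed.

Lemma step r : Sset r -> Sset ((r + K) / INR q).
Proof.
  intros Hr a b Hab Hba.
  pose proof Qpos as HQ.
  destruct (decomp a) as [ka [xa [Ha Ea]]].
  destruct (decomp b) as [kb [xb [Hb Eb]]].
  assert (Hdiff : IZR kb - IZR ka > -1 /\ IZR kb - IZR ka < 2).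
  { assert (INR q * (xb - xa) < 1).
    { assert (INR q * (xb - xa) < INR q * / INR q).
      { apply Rmult_lt_compat_l; lra. }
      rewrite Rinv_r in H; lra. }
    assert (INR q * (xb - xa) > -1).
    { assert (INR q * (xa - xb) < INR q * / INR q).
      { apply Rmult_lt_compat_l; lra. }
      rewrite Rinv_r in H0; lra. }
    nra. }
  destruct Hdiff as [D1 D2].
  rewrite <- minus_IZR in D1, D2.
  apply (lt_IZR (-1)) in D1. apply (lt_IZR _ 2) in D2.
  assert (Hk : kb = ka \/ kb = (ka + 1)%Z) by lia.
  rewrite Ea, Eb, !psi_eq by lra.
  destruct Hk as [Hk|Hk]; subst kb.
  - assert (xa <= xb).
    { assert (INR q * xa <= INR q * xb) by lra. nra. }
    assert (xb - xa < 1).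
    { assert (/ INR q < 1). { rewrite <- Rinv_1; apply Rinv_lt_contravar; lra. } lra. }
    specialize (Hr xa xb H H0). specialize (HK xa xb ltac:(lra) H ltac:(lra)).
    assert (E : (r + K) / INR q * (INR q * xb + IZR ka - (INR q * xa + IZR ka))
              = (r + K) * (xb - xa)) by (field; lra).
    rewrite E. nra.
  - rewrite plus_IZR in Eb |- *.
    assert (Hl := Heq lam ltac:(lra)).
    assert (Hr1 := Heq (lam + / INR q) ltac:(lra)).
    replace (INR q * (lam + / INR q)) with (INR q * lam + 1) in Hr1 by (field; lra).
    rewrite Hp in Hr1.
    assert (Hi : / INR q < 1). { rewrite <- Rinv_1; apply Rinv_lt_contravar; lra. }
    assert (A1 := Hr lam xb ltac:(lra) ltac:(lra)).
    assert (A2 := Hr xa (lam + / INR q) ltac:(lra) ltac:(lra)).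
    assert (B1 := HK lam xb ltac:(lra) ltac:(lra) ltac:(lra)).
    assert (B2 := HK xa (lam + / INR q) ltac:(lra) ltac:(lra) ltac:(lra)).
    assert (E : (r + K) / INR q * (INR q * xb + (IZR ka + 1) - (INR q * xa + IZR ka))
              = (r + K) * ((xb - lam) + (lam + / INR q - xa))) by (field; lra).
    rewrite E. nra.
Qed.

Lemma core a b : a <= b -> b - a < 1 ->
  psi b - psi a >= K / (INR q - 1) * (b - a).
Proof.
  pose proof Qpos as HQ.
  assert (Hne : exists r, Sset r).
  { exists (- L). intros x y Hxy _. specialize (HL y x).
    rewrite (Rabs_right (y - x)) in HL by lra.
    assert (-(psi y - psi x) <= Rabs (psi y - psi x)) by (rewrite <- Rabs_Ropp; apply Rle_abs). lra. }
  assert (Hb : bound Sset).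
  { exists 0. intros r Hr. specialize (Hr 0 (/2)) as H1.
    specialize (Hr (/2) 1) as H2.
    assert (psi 1 = psi 0) by (rewrite <- (Rplus_0_l 1), Hp; reflexivity).
    specialize (H1 ltac:(lra) ltac:(lra)). specialize (H2 ltac:(lra) ltac:(lra)).
    lra. }
  destruct (completeness Sset Hb Hne) as [m [Hm1 Hm2]].
  assert (Sm : Sset m).
  { intros x y Hxy Hyx.
    destruct (Rlt_le_dec (psi y - psi x) (m * (y - x))) as [Hc|Hc]; [|lra].
    exfalso.
    assert (Hpos : 0 < y - x).
    { destruct (Req_dec x y) as [->|]; [ring_simplify in Hc; lra| lra]. }
    assert (m <= (psi y - psi x) / (y - x)).
    { apply Hm2. intros r Hr. specialize (Hr x y Hxy Hyx).
      apply (Rmult_le_reg_r (y - x)); auto.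
      unfold Rdiv; rewrite Rmult_assoc, Rinv_l by lra. lra. }
    apply (Rmult_le_compat_r (y - x)) in H; [|lra].
    unfold Rdiv in H; rewrite Rmult_assoc, Rinv_l in H by lra. lra. }
  assert (Hm : (m + K) / INR q <= m) by (apply Hm1, step, Sm).
  assert (HmK : K / (INR q - 1) <= m).
  { apply (Rmult_le_compat_r (INR q)) in Hm; [|lra].
    unfold Rdiv in Hm. rewrite Rmult_assoc, Rinv_l in Hm by lra.
    apply (Rmult_le_reg_r (INR q - 1)); [lra|].
    unfold Rdiv. rewrite Rmult_assoc, Rinv_l by lra. lra. }
  intros Hab Hba. specialize (Sm a b Hab Hba).
  assert (K / (INR q - 1) * (b - a) <= m * (b - a)).
  { apply Rmult_le_compat_r; lra. }
  lra.
Qed.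
End Core.

Fixpoint W (n : nat) (y : R) : R :=
  match n with O => 0 | S m => W m y * cos y + cos (INR m * y) end.
Fixpoint W' (n : nat) (y : R) : R :=
  match n with O => 0 | S m => W' m y * cos y - W m y * sin y - INR m * sin (INR m * y) end.

Lemma W1 n y : W n y * sin y = sin (INR n * y).
Proof.
  induction n as [|m IH]; simpl W.
  - simpl. rewrite Rmult_0_l, Rmult_0_l, sin_0. reflexivity.
  - rewrite S_INR. replace ((INR m + 1) * y) with (INR m * y + y) by ring.
    rewrite sin_plus, <- IH. ring.
Qed.

Lemma W2 n y : W n (- y) = W n y.
Proof.
  induction n as [|m IH]; simpl W; auto.
  rewrite IH, cos_neg. replace (INR m * - y) with (- (INR m * y)) by ring.
  rewrite cos_neg. reflexivity.
Qed.

Lemma W3 n : W n 0 = INR n.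
Proof.
  induction n as [|m IH]; simpl W; auto.
  rewrite IH, Rmult_0_r, cos_0, S_INR. ring.
Qed.

Lemma W5 n y : W' n (- y) = - W' n y.
Proof.
  induction n as [|m IH]; simpl W'. ring.
  rewrite IH, W2, cos_neg, sin_neg. replace (INR m * - y) with (- (INR m * y)) by ring.
  rewrite sin_neg. ring.
Qed.

Lemma W6 n y : W' n y * sin y + W n y * cos y = INR n * cos (INR n * y).
Proof.
  induction n as [|m IH]; simpl W; simpl W'.
  - simpl. ring.
  - rewrite S_INR. replace ((INR m + 1) * y) with (INR m * y + y) by ring.
    rewrite cos_plus.
    assert (E1 := W1 m y).
    assert (E2 : sin y ^ 2 = 1 - cos y ^ 2) by (rewrite <- (sin2_cos2 y); unfold Rsqr; ring).
    replace ((W' m y * cos y - W m y * sin y - INR m * sin (INR m * y)) * sin y +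
      (W m y * cos y + cos (INR m * y)) * cos y)
    with (cos y * (W' m y * sin y + W m y * cos y) - W m y * sin y * sin y - INR m * sin (INR m * y) * sin y + cos (INR m * y) * cos y) by ring.
    rewrite IH, E1. ring.
Qed.

Lemma W4 n y : is_derive (W n) y (W' n y).
Proof.
  induction n as [|m IH]; simpl W; simpl W'.
  - apply is_derive_ext with (f := fun _ => 0); [intros; reflexivity| auto_derive; auto].
  - assert (Hc : is_derive (fun t => cos t) y (- sin y)).
    { auto_derive; auto. ring. }
    assert (Hc2 : is_derive (fun t => cos (INR m * t)) y (- INR m * sin (INR m * y))).
    { auto_derive; auto. ring. }
    apply is_derive_ext with (f := fun t => W m t * cos t + cos (INR m * t)); [intros; reflexivity|].
    replace (W' m y * cos y - W m y * sin y - INR m * sin (INR m * y)) with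
      (plus (plus (mult (W' m y) (cos y)) (mult (W m y) (- sin y))) (- INR m * sin (INR m * y)))
      by (unfold plus, mult; simpl; ring).
    apply (is_derive_plus (fun t => W m t * cos t) (fun t => cos (INR m * t))); [|exact Hc2].
    apply (is_derive_mult (W m) (fun t => cos t)); auto. intros; apply Rmult_comm.
Qed.

Lemma deriv_cont f x l : is_derive f x l -> continuity_pt f x.
Proof.
  intros H. apply continuity_pt_filterlim.
  apply (ex_derive_continuous (K:=R_AbsRing) (V:=R_NormedModule)).
  exists l; exact H.
Qed.

Lemma sin_n_le n y : Rabs (sin (INR n * y)) <= INR n * Rabs (sin y).
Proof.
  induction n as [|m IH].
  - simpl. rewrite Rmult_0_l, sin_0, Rabs_R0. lra.
  - rewrite S_INR. replace ((INR m + 1) * y) with (INR m * y + y) by ring.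
    rewrite sin_plus.
    eapply Rle_trans; [apply Rabs_triang|]. rewrite !Rabs_mult.
    assert (Rabs (cos y) <= 1) by (apply Rabs_le; apply COS_bound).
    assert (Rabs (cos (INR m * y)) <= 1) by (apply Rabs_le; apply COS_bound).
    assert (0 <= Rabs (sin (INR m * y))) by apply Rabs_pos.
    assert (0 <= Rabs (sin y)) by apply Rabs_pos.
    nra.
Qed.

Lemma PIpos_div n : (1 <= n)%nat -> PI / INR n <= PI.
Proof.
  intros Hn. apply le_INR in Hn. simpl in Hn. pose proof PI_RGT_0.
  unfold Rdiv. rewrite <- (Rmult_1_r PI) at 2. apply Rmult_le_compat_l; [lra|].
  rewrite <- Rinv_1. apply Rinv_le_contravar; lra.
Qed.

Lemma mul_lt_PI n y : (1 <= n)%nat -> y < PI / INR n -> INR n * y < PI.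
Proof.
  intros Hn Hy. apply le_INR in Hn. simpl in Hn.
  apply (Rmult_lt_compat_l (INR n)) in Hy; [|lra].
  replace (INR n * (PI / INR n)) with PI in Hy by (field; lra). exact Hy.
Qed.

Lemma mul_le_PI n y : (1 <= n)%nat -> y <= PI / INR n -> INR n * y <= PI.
Proof.
  intros Hn Hy. apply le_INR in Hn. simpl in Hn.
  apply (Rmult_le_compat_l (INR n)) in Hy; [|lra].
  replace (INR n * (PI / INR n)) with PI in Hy by (field; lra). exact Hy.
Qed.

Lemma Wpos_pos n y : (1 <= n)%nat -> 0 < y < PI / INR n -> 0 < W n y.
Proof.
  intros Hn [H1 H2].
  assert (HP := PIpos_div n Hn).
  assert (Hn' := le_INR _ _ Hn). simpl in Hn'.
  assert (0 < sin y) by (apply sin_gt_0; lra).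
  assert (0 < sin (INR n * y)).
  { apply sin_gt_0. nra. apply mul_lt_PI; auto. }
  rewrite <- W1 in H0. nra.
Qed.

Lemma Wpos n y : (1 <= n)%nat -> - (PI / INR n) < y < PI / INR n -> 0 < W n y.
Proof.
  intros Hn H.
  destruct (Rtotal_order y 0) as [Hy|[Hy|Hy]].
  - rewrite <- (Ropp_involutive y), W2. apply Wpos_pos; auto; lra.
  - subst. rewrite W3. apply le_INR in Hn; simpl in Hn; lra.
  - apply Wpos_pos; auto; lra.
Qed.

Definition kf (n : nat) (y : R) := sin (INR n * y) * cos y - INR n * cos (INR n * y) * sin y.

Lemma kf_nonneg n y : (1 <= n)%nat -> 0 <= y <= PI / INR n -> 0 <= kf n y.
Proof.
  intros Hn Hy.
  assert (HP := PIpos_div n Hn).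
  assert (Hn' := le_INR _ _ Hn). simpl in Hn'.
  assert (Hd : forall c, is_derive (kf n) c ((INR n ^ 2 - 1) * sin (INR n * c) * sin c)).
  { intros c. unfold kf. auto_derive; auto. ring. }
  destruct (MVT_gen (kf n) 0 y _ (fun c _ => Hd c) (fun c _ => deriv_cont _ _ _ (Hd c)))
    as [c [Hc E]].
  rewrite Rmin_left in Hc by lra. rewrite Rmax_right in Hc by lra.
  assert (kf n 0 = 0) by (unfold kf; rewrite Rmult_0_r, sin_0; ring).
  assert (0 <= sin c) by (apply sin_ge_0; lra).
  assert (0 <= sin (INR n * c)).
  { apply sin_ge_0. nra. apply mul_le_PI; auto; lra. }
  assert (0 <= INR n ^ 2 - 1) by nra.
  assert (0 <= (INR n ^ 2 - 1) * sin (INR n * c) * sin c).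
  { apply Rmult_le_pos; [apply Rmult_le_pos|]; auto. }
  nra.
Qed.

Lemma G1 n y : (1 <= n)%nat -> 0 < y < PI / INR n -> W' n y <= 0.
Proof.
  intros Hn Hy.
  assert (HP := PIpos_div n Hn).
  assert (0 < sin y) by (apply sin_gt_0; lra).
  assert (K := kf_nonneg n y Hn ltac:(lra)).
  assert (E6 := W6 n y). assert (E1 := W1 n y).
  unfold kf in K.
  assert (W' n y * (sin y * sin y) = - (sin (INR n * y) * cos y - INR n * cos (INR n * y) * sin y)).
  { rewrite <- E1. replace (INR n * cos (INR n * y) * sin y) with
      ((W' n y * sin y + W n y * cos y) * sin y) by (rewrite E6; ring). ring. }
  assert (0 < sin y * sin y) by nra.
  nra.
Qed.

Definition Hf (n : nat) (y : R) := INR n * cos (INR n * y) / sin (INR n * y) - cos y / sin y.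

Lemma G2 n y z : (1 <= n)%nat -> 0 < y -> y <= z -> z < PI / INR n -> Hf n z <= Hf n y.
Proof.
  intros Hn Hy Hyz Hz.
  assert (HP := PIpos_div n Hn).
  assert (Hn' := le_INR _ _ Hn). simpl in Hn'.
  assert (Hs : forall c, y <= c <= z -> 0 < sin c /\ 0 < sin (INR n * c)).
  { intros c Hc. split; apply sin_gt_0; try lra; try nra. apply mul_lt_PI; auto; lra. }
  assert (Hd : forall c, y <= c <= z -> is_derive (Hf n) c (1 / sin c ^ 2 - INR n ^ 2 / sin (INR n * c) ^ 2)).
  { intros c Hc. destruct (Hs c Hc) as [S1 S2]. unfold Hf. auto_derive.
    - repeat split; lra.
    - assert (E1 := sin2_cos2 c). assert (E2 := sin2_cos2 (INR n * c)). unfold Rsqr in E1, E2.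
      field_simplify; [|lra|lra]. f_equal.
      replace (cos (INR n * c) ^ 2) with (1 - sin (INR n * c) ^ 2) by (simpl; lra).
      replace (cos c ^ 2) with (1 - sin c ^ 2) by (simpl; lra). ring. }
  destruct (MVT_gen (Hf n) y z (fun c => 1 / sin c ^ 2 - INR n ^ 2 / sin (INR n * c) ^ 2))
    as [c [Hc E]].
  { intros c Hc. rewrite Rmin_left in Hc by lra. rewrite Rmax_right in Hc by lra.
    apply Hd; lra. }
  { intros c Hc. rewrite Rmin_left in Hc by lra. rewrite Rmax_right in Hc by lra.
    eapply deriv_cont. apply Hd; lra. }
  rewrite Rmin_left in Hc by lra. rewrite Rmax_right in Hc by lra.
  destruct (Hs c Hc) as [S1 S2].
  assert (B := sin_n_le n c). rewrite !Rabs_right in B by lra.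
  assert (1 / sin c ^ 2 - INR n ^ 2 / sin (INR n * c) ^ 2 <= 0).
  { assert (1 / sin c ^ 2 <= INR n ^ 2 / sin (INR n * c) ^ 2).
    { apply Rmult_le_reg_r with (sin c ^ 2 * sin (INR n * c) ^ 2).
      { apply Rmult_lt_0_compat; apply pow_lt; lra. }
      replace (1 / sin c ^ 2 * (sin c ^ 2 * sin (INR n * c) ^ 2)) with (sin (INR n * c) ^ 2) by (field; lra).
      replace (INR n ^ 2 / sin (INR n * c) ^ 2 * (sin c ^ 2 * sin (INR n * c) ^ 2)) with ((INR n * sin c) ^ 2) by (field; lra).
      apply pow_incr. lra. }
    lra. }
  nra.
Qed.

Section Q.
Variable q : nat.
Hypothesis Hq : (2 <= q)%nat.

Lemma Hq1 : (1 <= q)%nat. Proof. lia. Qed.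
Lemma HQ : 2 <= INR q. Proof. apply (le_INR 2) in Hq. simpl in Hq. lra. Qed.

Definition Fd x := PI * W' q (PI * x) / W q (PI * x).

Lemma PIx_range x : - / INR q < x < / INR q -> - (PI / INR q) < PI * x < PI / INR q.
Proof.
  intros H. pose proof PI_RGT_0. unfold Rdiv. split; nra.
Qed.

Lemma Wq_pos x : - / INR q < x < / INR q -> 0 < W q (PI * x).
Proof. intros H. apply Wpos; [apply Hq1| apply PIx_range; auto]. Qed.

Lemma P1 x : - / INR q < x < / INR q -> f0 q x = ln (W q (PI * x)).
Proof.
  intros H. pose proof PI_RGT_0 as HPI. pose proof HQ as HQ.
  assert (Hi : / INR q <= 1). { rewrite <- Rinv_1. apply Rinv_le_contravar; lra. }
  unfold f0. destruct (Req_EM_T (sin (PI * x)) 0) as [E|E].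
  - assert (x = 0).
    { destruct (Rtotal_order x 0) as [Hx|[Hx|Hx]]; auto; exfalso.
      - assert (0 < sin (- (PI * x))) by (apply sin_gt_0; nra).
        rewrite sin_neg in H0. lra.
      - assert (0 < sin (PI * x)) by (apply sin_gt_0; nra). lra. }
    subst. rewrite Rmult_0_r, W3. reflexivity.
  - replace (PI * INR q * x) with (INR q * (PI * x)) by ring.
    rewrite <- W1. replace (W q (PI * x) * sin (PI * x) / sin (PI * x)) with (W q (PI * x)) by (field; auto).
    rewrite Rabs_right; auto. left; apply Wq_pos; auto.
Qed.

Lemma f0_derive x : - / INR q < x < / INR q -> is_derive (f0 q) x (Fd x).
Proof.
  intros H.
  apply is_derive_ext_loc with (f := fun t => ln (W q (PI * t))).
  { set (e := Rmin (x + / INR q) (/ INR q - x)).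
    assert (He : 0 < e) by (apply Rmin_pos; lra).
    exists (mkposreal e He). intros y Hy. simpl in Hy.
    unfold ball in Hy; simpl in Hy; unfold AbsRing_ball, abs, minus, plus, opp in Hy; simpl in Hy.
    apply Rabs_def2 in Hy. destruct Hy.
    assert (e <= x + / INR q) by apply Rmin_l.
    assert (e <= / INR q - x) by apply Rmin_r.
    symmetry. apply P1. lra. }
  assert (Hw := Wq_pos x H).
  assert (Hg : is_derive (fun t => W q (PI * t)) x (PI * W' q (PI * x))).
  { apply (is_derive_comp (W q) (fun t => PI * t)).
    - apply W4.
    - auto_derive; auto. ring. }
  assert (Hl : is_derive ln (W q (PI * x)) (/ W q (PI * x))).
  { auto_derive; auto. ring. }
  pose proof (is_derive_comp ln (fun t => W q (PI * t)) x _ _ Hl Hg) as Hc.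
  eapply is_derive_ext; [|eapply (filterdiff_ext_lin _ _ _ Hc)].
  - intros; reflexivity.
  - intros y. unfold scal; simpl; unfold mult; simpl. unfold Fd. field. lra.
Qed.

Lemma Derive_f0 x : - / INR q < x < / INR q -> Derive (f0 q) x = Fd x.
Proof. intros H. apply is_derive_unique, f0_derive, H. Qed.

Lemma W'0 : W' q 0 = 0.
Proof. assert (E := W5 q 0). rewrite Ropp_0 in E. lra. Qed.

Lemma Fd_odd x : Fd (- x) = - Fd x.
Proof.
  unfold Fd. replace (PI * - x) with (- (PI * x)) by ring.
  rewrite W5, W2. unfold Rdiv. ring.
Qed.

Lemma Fd_nonpos x : 0 <= x < / INR q -> Fd x <= 0.
Proof.
  intros H. pose proof PI_RGT_0 as HPI. pose proof HQ as HQ.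
  assert (Hw : 0 < W q (PI * x)) by (apply Wq_pos; lra).
  destruct (Req_dec x 0) as [->|Hx].
  - unfold Fd. rewrite Rmult_0_r, W'0. unfold Rdiv. lra.
  - assert (W' q (PI * x) <= 0).
    { apply G1; [apply Hq1|]. split; [nra|]. apply PIx_range; lra. }
    unfold Fd, Rdiv. assert (0 < / W q (PI * x)) by (apply Rinv_0_lt_compat; auto).
    assert (PI * W' q (PI * x) <= 0) by nra. nra.
Qed.

Lemma Fd_nonneg x : - / INR q < x <= 0 -> 0 <= Fd x.
Proof.
  intros H. rewrite <- (Ropp_involutive x), Fd_odd.
  assert (Fd (- x) <= 0) by (apply Fd_nonpos; lra). lra.
Qed.

Lemma WH y : 0 < y < PI / INR q -> W' q y / W q y = Hf q y.
Proof.
  intros H. pose proof HQ as HQ.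
  assert (Hw : 0 < W q y) by (apply Wpos; [apply Hq1| lra]).
  assert (HP := PIpos_div q Hq1).
  assert (0 < sin y) by (apply sin_gt_0; lra).
  unfold Hf. rewrite <- W1. rewrite <- W6. field. lra.
Qed.

Lemma Fd_mono a b : 0 < a -> a <= b -> b < / INR q -> Fd b <= Fd a.
Proof.
  intros Ha Hab Hb. pose proof PI_RGT_0 as HPI. pose proof HQ as HQ.
  assert (Rb : PI * b < PI / INR q) by (apply PIx_range; lra).
  unfold Fd, Rdiv. rewrite !Rmult_assoc.
  fold (Rdiv (W' q (PI * b)) (W q (PI * b))). fold (Rdiv (W' q (PI * a)) (W q (PI * a))).
  rewrite !WH by (split; nra).
  apply Rmult_le_compat_l; [lra|].
  apply G2; [apply Hq1| nra | nra | auto].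
Qed.

Lemma I1 th u v : 0 < th < / INR q -> th - / INR q <= u -> u <= v -> v <= th ->
  f0 q v - f0 q u >= Fd th * (v - u).
Proof.
  intros Hth Hu Huv Hv.
  destruct (MVT_gen (f0 q) u v Fd) as [c [Hc E]].
  { intros c Hc. rewrite Rmin_left in Hc by lra. rewrite Rmax_right in Hc by lra.
    apply f0_derive; lra. }
  { intros c Hc. rewrite Rmin_left in Hc by lra. rewrite Rmax_right in Hc by lra.
    eapply deriv_cont. apply f0_derive; lra. }
  rewrite Rmin_left in Hc by lra. rewrite Rmax_right in Hc by lra.
  rewrite E.
  assert (Fd th <= Fd c).
  { destruct (Rle_or_lt c 0).
    - assert (Fd th <= 0) by (apply Fd_nonpos; lra).
      assert (0 <= Fd c) by (apply Fd_nonneg; lra). lra.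
    - apply Fd_mono; lra. }
  nra.
Qed.

Lemma I2 th u v : 0 < th < / INR q -> th - / INR q <= u -> u <= v -> v <= th ->
  f0 q v - f0 q u <= - Fd (/ INR q - th) * (v - u).
Proof.
  intros Hth Hu Huv Hv.
  destruct (MVT_gen (f0 q) u v Fd) as [c [Hc E]].
  { intros c Hc. rewrite Rmin_left in Hc by lra. rewrite Rmax_right in Hc by lra.
    apply f0_derive; lra. }
  { intros c Hc. rewrite Rmin_left in Hc by lra. rewrite Rmax_right in Hc by lra.
    eapply deriv_cont. apply f0_derive; lra. }
  rewrite Rmin_left in Hc by lra. rewrite Rmax_right in Hc by lra.
  rewrite E.
  assert (Fd c <= - Fd (/ INR q - th)).
  { destruct (Rle_or_lt 0 c).
    - assert (Fd (/ INR q - th) <= 0) by (apply Fd_nonpos; lra).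
      assert (Fd c <= 0) by (apply Fd_nonpos; lra). lra.
    - rewrite <- (Ropp_involutive c), Fd_odd.
      assert (Fd (/ INR q - th) <= Fd (- c)) by (apply Fd_mono; lra). lra. }
  nra.
Qed.
End Q.

Lemma f0_even q x : (2 <= q)%nat -> - / INR q < x < / INR q -> f0 q (- x) = f0 q x.
Proof.
  intros Hq H. rewrite !P1 by (auto; lra).
  replace (PI * - x) with (- (PI * x)) by ring. rewrite W2. reflexivity.
Qed.

Theorem lemma5p5 (q : nat) (c lam : R) (psi : R -> R) (beta : R) :
  (2 <= q)%nat ->
  - / INR q - c < lam < - c ->
  pre_sturmian_with q c lam psi beta ->
  let theta := lam + / INR q + c in
  let f := f0 q in
  (forall x, lam + / INR q < x < lam + 2 / INR q ->
     let t := x - lam - / INR q in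
     psi (INR q * x) - psi (INR q * (lam + / INR q)) >=
       f (/ INR q - theta - t) - f (/ INR q - theta)
       + Derive f theta * (t / (INR q - 1))) /\
  (forall x, lam - / INR q < x < lam ->
     let t := lam - x in
     psi (INR q * x) - psi (INR q * lam) >=
       f (theta - t) - f theta
       + Derive f (/ INR q - theta) * (t / (INR q - 1))).
Proof.
  intros Hq Hlam Hpre theta f.
  destruct Hpre as [_ [Hp [[L HL] Heq]]].
  pose proof (HQ q Hq) as HQ.
  assert (Hqi : 0 < / INR q) by (apply Rinv_0_lt_compat; lra).
  assert (HL' : forall x y, Rabs (psi x - psi y) <= Rabs L * Rabs (x - y)).
  { intros x y. eapply Rle_trans; [apply HL|].
    assert (0 <= dT x y) by (unfold dT; apply Rabs_pos).
    assert (L * dT x y <= Rabs L * dT x y) by (apply Rmult_le_compat_r; auto; apply Rle_abs).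
    assert (Rabs L * dT x y <= Rabs L * Rabs (x - y)) by (apply Rmult_le_compat_l; [apply Rabs_pos| apply dT_le]).
    lra. }
  assert (Heq0 : forall x, lam <= x <= lam + / INR q -> fc q c x + psi x - psi (INR q * x) = beta).
  { intros x Hx. apply Heq. exists 0%Z. simpl. rewrite Rminus_0_r. auto. }
  assert (Hth : 0 < theta < / INR q) by (unfold theta; lra).
  assert (Hi1 : / INR q < 1). { rewrite <- Rinv_1. apply Rinv_lt_contravar; lra. }
  assert (Eper : psi (INR q * (lam + / INR q)) = psi (INR q * lam)).
  { replace (INR q * (lam + / INR q)) with (INR q * lam + 1) by (field; lra). apply Hp. }
  split.
  - intros x Hx t.
    assert (Ht : 0 < t < / INR q) by (unfold t; lra).
    assert (Hc := core q lam beta (Derive f theta) (Rabs L) psi (fc q c) Hq Hp HL' Heq0).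
    assert (Hr : psi (lam + t) - psi lam >= Derive f theta / (INR q - 1) * (lam + t - lam)).
    { apply Hc; try lra.
      intros u v Hu Huv Hv. unfold fc, f. rewrite Derive_f0 by (auto; lra).
      assert (I := I1 q Hq theta (u + c) (v + c) Hth ltac:(unfold theta in *; lra)
          ltac:(lra) ltac:(unfold theta in *; lra)).
      replace (v + c - (u + c)) with (v - u) in I by ring. exact I. }
    replace (INR q * x) with (INR q * (lam + t) + 1) by (unfold t; field; lra).
    rewrite Hp, Eper.
    assert (E1 := Heq0 (lam + t) ltac:(lra)).
    assert (E2 := Heq0 lam ltac:(lra)).
    unfold fc in E1, E2.
    replace (/ INR q - theta - t) with (- (lam + t + c)) by (unfold theta; ring).
    replace (/ INR q - theta) with (- (lam + c)) by (unfold theta; ring).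
    unfold f. rewrite !f0_even by (auto; unfold theta in *; lra).
    replace (Derive (f0 q) theta * (t / (INR q - 1))) with
      (Derive f theta / (INR q - 1) * (lam + t - lam)) by (unfold f; field; lra).
    lra.
  - intros x Hx t.
    assert (Ht : 0 < t < / INR q) by (unfold t; lra).
    assert (Hc := core q lam (- beta) (Derive f (/ INR q - theta)) (Rabs L) (fun y => - psi y)
      (fun y => - fc q c y) Hq).
    assert (Hr : - psi (lam + / INR q) - - psi (lam + / INR q - t) >=
       Derive f (/ INR q - theta) / (INR q - 1) * (lam + / INR q - (lam + / INR q - t))).
    { apply Hc; [ | | | | lra | lra].
      - intros y. rewrite Hp. reflexivity.
      - intros y z. replace (- psi y - - psi z) with (- (psi y - psi z)) by ring.
        rewrite Rabs_Ropp. apply HL'.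
      - intros y Hy. specialize (Heq0 y Hy). lra.
      - intros u v Hu Huv Hv. unfold fc, f. rewrite Derive_f0 by (auto; lra).
        assert (I := I2 q Hq theta (u + c) (v + c) Hth ltac:(unfold theta in *; lra)
          ltac:(lra) ltac:(unfold theta in *; lra)).
        replace (v + c - (u + c)) with (v - u) in I by ring. lra. }
    replace (INR q * x) with (INR q * (lam + / INR q - t) - 1) by (unfold t; field; lra).
    rewrite <- Eper.
    replace (psi (INR q * (lam + / INR q - t) - 1)) with (psi (INR q * (lam + / INR q - t)))
      by (rewrite <- (Hp (INR q * (lam + / INR q - t) - 1)); f_equal; ring).
    assert (E1 := Heq0 (lam + / INR q - t) ltac:(lra)).
    assert (E2 := Heq0 (lam + / INR q) ltac:(lra)).
    unfold fc in E1, E2.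
    replace (theta - t) with (lam + / INR q - t + c) by (unfold theta; ring).
    unfold f. unfold theta.
    replace (Derive (f0 q) (/ INR q - (lam + / INR q + c)) * (t / (INR q - 1))) with
      (Derive f (/ INR q - theta) / (INR q - 1) * (lam + / INR q - (lam + / INR q - t)))
      by (unfold f, theta; field; lra).
    lra.
Qed.
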